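(* Let $V$ be a finite-dimensional super vector space over a field of characteristic $0$, and let $L\subseteq\mathcal{E}=\mathfrak{gl}(V)\oplus V$ be a graded subspace. Then $L=L^\perp$ if and only if there exist a graded subspace $W\subseteq V$ and an even linear map $\pi:V\to\mathfrak{gl}(V)$ which is super skew-symmetric, i.e. $\pi(x)(y)=-(-1)^{|x||y|}\pi(y)(x)$ for all homogeneous $x,y\in V$, such that $$L=\{X+\pi(x)+x:\ X\in W^0,\ x\in W\},\qquad W^0=\{X\in\mathfrak{gl}(V): X(w)=0\ \forall w\in W\}.$$ In this situation $L\cap\mathfrak{gl}(V)=W^0$ and $W=D^0:=\{x\in V: X(x)=0\ \forall X\in D\}$ where $D=L\cap\mathfrak{gl}(V)$.
   Context: $\mathfrak{gl}(V)$: linear endomorphisms of $V$ with natural $\mathbb{Z}_2$-grading and supercommutator $[A,B]=AB-(-1)^{|A||B|}BA$. $\mathcal{E}=\mathfrak{gl}(V)\oplus V$ graded by $\mathcal{E}_\alpha=\mathfrak{gl}(V)_\alpha\oplus V_\alpha$, homogeneous elements $A+x$ with $|A|=|x|$. $V$-valued pairing: $\langle A+x,B+y\rangle=\tfrac12(Ay+(-1)^{|x||y|}Bx)$, extended bilinearly. For a subspace $F\subseteq\mathcal{E}$, $F^\perp=\{e\in\mathcal{E}:\langle e,f\rangle=0\ \forall f\in F\}$; $F$ is called maximal isotropic if $F=F^\perp$. *)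

(* Defs.v *)
(* Model of a finite-dimensional super vector space V = F^(m|n):
   V := 'rV[F]_(m+n), coordinates j with j < m are even, j >= m are odd.
   gl(V) := 'M[F]_(m+n), acting on the right: A(y) := y *m A.
   E := gl(V) (+) V  is the product type, elements (A, x) stand for A + x. *)
From HB Require Import structures.
From mathcomp Require Import all_boot all_order all_algebra.
Set Implicit Arguments. Unset Strict Implicit. Unset Printing Implicit Defensive.
Import Order.TTheory GRing.Theory Num.Theory.
Local Open Scope ring_scope.

Section Super.
Variables (F : fieldType) (m n : nat).

Definition Vsp := 'rV[F]_(m + n).
Definition glV := 'M[F]_(m + n).
Definition Esp := (glV * Vsp)%type.

Definition ipar (i : 'I_(m + n)) : bool := (m <= i)%N.

Definition vproj (b : bool) (x : Vsp) : Vsp :=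
  \row_j (if ipar j == b then x 0 j else 0).

(* degree-b component of an endomorphism (entry i j maps coordinate i to j) *)
Definition mproj (b : bool) (A : glV) : glV :=
  \matrix_(i, j) (if (ipar i != ipar j) == b then A i j else 0).

Definition vhom (b : bool) (x : Vsp) : Prop := vproj b x = x.
Definition mhom (b : bool) (A : glV) : Prop := mproj b A = A.

Definition eproj (b : bool) (e : Esp) : Esp := (mproj b e.1, vproj b e.2).

(* the V-valued pairing <A+x, B+y> = 1/2 (A y + (-1)^{|x||y|} B x) on homogeneous
   elements, extended bilinearly *)
Definition epair (e f : Esp) : Vsp :=
  2%:R^-1 *: \sum_(a : bool) \sum_(b : bool)
     ((vproj b f.2) *m (mproj a e.1)
      + (-1) ^+ (a && b) *: ((vproj a e.2) *m (mproj b f.1))).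

Definition in_perp (L : {vspace Esp}) (e : Esp) : Prop :=
  forall f, f \in L -> epair e f = 0.

Definition max_isotropic (L : {vspace Esp}) : Prop :=
  forall e, e \in L <-> in_perp L e.

Definition graded_E (L : {vspace Esp}) : Prop :=
  forall (b : bool) e, e \in L -> eproj b e \in L.

Definition graded_V (W : {vspace Vsp}) : Prop :=
  forall (b : bool) x, x \in W -> vproj b x \in W.

Definition annV (W : {vspace Vsp}) (X : glV) : Prop :=
  forall w, w \in W -> w *m X = 0.

Definition annGl (D : glV -> Prop) (x : Vsp) : Prop :=
  forall X, D X -> x *m X = 0.

Definition even_map (pi : Vsp -> glV) : Prop :=
  forall (b : bool) x, vhom b x -> mhom b (pi x).

Definition super_skew (pi : Vsp -> glV) : Prop :=
  forall (a b : bool) x y, vhom a x -> vhom b y ->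
    y *m pi x = - ((-1) ^+ (a && b) *: (x *m pi y)).

Definition L_of (L : {vspace Esp}) (W : {vspace Vsp}) (pi : Vsp -> glV) : Prop :=
  forall e, e \in L <-> exists X x, [/\ annV W X, x \in W & e = (X + pi x, x)].

End Super.

(* Main.v *)
Require Import Defs.
From HB Require Import structures.
From mathcomp Require Import all_boot all_order all_algebra.
Import GRing.Theory.
Local Open Scope ring_scope.
Set Implicit Arguments. Unset Strict Implicit. Unset Printing Implicit Defensive.

Section Basic.
Variables (F : fieldType) (m n : nat).
Local Notation V := (Vsp F m n).
Local Notation G := (glV F m n).
Local Notation E := (Esp F m n).

Definition Dm (b : bool) : G := diag_mx (\row_j ((ipar j == b)%:R : F)).

Lemma vprojE b (x : V) : vproj b x = x *m Dm b.
Proof.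
apply/rowP => j; rewrite /vproj /Dm mul_mx_diag !mxE.
by case: (ipar j == b); rewrite ?mulr1 ?mulr0.
Qed.

Lemma vprojD b (x y : V) : vproj b (x + y) = vproj b x + vproj b y.
Proof. by rewrite !vprojE mulmxDl. Qed.
Lemma vprojN b (x : V) : vproj b (- x) = - vproj b x.
Proof. by rewrite !vprojE mulNmx. Qed.
Lemma vprojB b (x y : V) : vproj b (x - y) = vproj b x - vproj b y.
Proof. by rewrite vprojD vprojN. Qed.
Lemma vprojZ b c (x : V) : vproj b (c *: x) = c *: vproj b x.
Proof. by rewrite !vprojE scalemxAl. Qed.
Lemma vproj0 b : vproj b (0 : V) = 0.
Proof. by rewrite vprojE mul0mx. Qed.

Lemma vproj_split (x : V) : vproj true x + vproj false x = x.
Proof.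
apply/rowP => j; rewrite !mxE.
by case: (ipar j); rewrite /= ?addr0 ?add0r.
Qed.

Lemma vproj_sum (x : V) : \sum_(b : bool) vproj b x = x.
Proof. by rewrite big_bool /= vproj_split. Qed.

Lemma vprojK a b (x : V) : vproj a (vproj b x) = if a == b then vproj b x else 0.
Proof.
apply/rowP => j; rewrite !mxE.
by case: a; case: b; rewrite /= ?mxE; case: (ipar j).
Qed.

Lemma mprojD b (A B : G) : mproj b (A + B) = mproj b A + mproj b B.
Proof. apply/matrixP => i j; rewrite !mxE; by case: ifP; rewrite ?addr0. Qed.
Lemma mprojN b (A : G) : mproj b (- A) = - mproj b A.
Proof. apply/matrixP => i j; rewrite !mxE; by case: ifP; rewrite ?oppr0. Qed.
Lemma mprojB b (A B : G) : mproj b (A - B) = mproj b A - mproj b B.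
Proof. by rewrite mprojD mprojN. Qed.
Lemma mprojZ b c (A : G) : mproj b (c *: A) = c *: mproj b A.
Proof. apply/matrixP => i j; rewrite !mxE; by case: ifP; rewrite ?mulr0. Qed.
Lemma mproj0 b : mproj b (0 : G) = 0.
Proof. apply/matrixP => i j; rewrite !mxE; by case: ifP. Qed.

Lemma mproj_split (A : G) : mproj true A + mproj false A = A.
Proof.
apply/matrixP => i j; rewrite !mxE.
by case: (ipar i != ipar j); rewrite /= ?addr0 ?add0r.
Qed.

Lemma mproj_sum (A : G) : \sum_(b : bool) mproj b A = A.
Proof. by rewrite big_bool /= mproj_split. Qed.

Lemma mprojK a b (A : G) : mproj a (mproj b A) = if a == b then mproj b A else 0.
Proof.
apply/matrixP => i j; rewrite !mxE.
by case: a; case: b; rewrite /= ?mxE; case: (ipar i != ipar j).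
Qed.

Lemma vproj_mul c b (y : V) (A : G) :
  vproj c (y *m mproj b A) = vproj (c (+) b) y *m mproj b A.
Proof.
apply/rowP => j; rewrite !mxE.
case: ifP => hj.
  apply: eq_bigr => i _; rewrite !mxE.
  move: hj; case: (ipar i); case: (ipar j); case: c; case: b => //=; by rewrite ?mul0r ?mulr0.
rewrite big1 // => i _; rewrite !mxE.
move: hj; case: (ipar i); case: (ipar j); case: c; case: b => //=; by rewrite ?mul0r ?mulr0.
Qed.

Lemma mhomM a b (A B : G) : mhom a A -> mhom b B -> mhom (a (+) b) (A *m B).
Proof.
rewrite /mhom => hA hB; rewrite -hA -hB {hA hB}.
apply/matrixP => i j; rewrite !mxE.
case: ifP => h //.
rewrite big1 // => k _; rewrite !mxE.
move: h; case: (ipar i); case: (ipar j); case: (ipar k); case: a; case: b => //=; by rewrite ?mul0r ?mulr0.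
Qed.


Lemma vhomP b (x : V) : vhom b x -> forall c, vproj c x = if c == b then x else 0.
Proof. by rewrite /vhom => h c; rewrite -h vprojK h. Qed.
Lemma mhomP b (A : G) : mhom b A -> forall c, mproj c A = if c == b then A else 0.
Proof. by rewrite /mhom => h c; rewrite -h mprojK h. Qed.
Lemma vhom_proj b (x : V) : vhom b (vproj b x).
Proof. by rewrite /vhom vprojK eqxx. Qed.
Lemma mhom_proj b (A : G) : mhom b (mproj b A).
Proof. by rewrite /mhom mprojK eqxx. Qed.

Definition sterm (x : V) (B : G) : V :=
  \sum_(a : bool) \sum_(b : bool) (-1) ^+ (a && b) *: (vproj a x *m mproj b B).

Lemma epairE (e f : E) : epair e f = 2%:R^-1 *: (f.2 *m e.1 + sterm e.2 f.1).
Proof.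
rewrite /epair /sterm; congr (_ *: _).
under eq_bigr do rewrite big_split; rewrite big_split /=; congr (_ + _).
rewrite -[in RHS](mproj_sum e.1) -[in RHS](vproj_sum f.2) mulmx_sumr.
by apply: eq_bigr => a _; rewrite mulmx_suml.
Qed.

Lemma sterm_hom a b (u : V) (B : G) : vhom a u -> mhom b B ->
  sterm u B = (-1) ^+ (a && b) *: (u *m B).
Proof.
move=> hu hB; rewrite /sterm !big_bool /= !(vhomP hu) !(mhomP hB).
by case: a {hu}; case: b {hB}; rewrite /= ?mul0mx ?mulmx0 ?scaler0 ?addr0 ?add0r.
Qed.

Lemma sterm0 (B : G) : sterm 0 B = 0.
Proof. by rewrite /sterm big1 // => a _; rewrite big1 // => b _; rewrite vproj0 mul0mx scaler0. Qed.

Lemma stermD (x : V) (B C : G) : sterm x (B + C) = sterm x B + sterm x C.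
Proof.
rewrite /sterm -big_split; apply: eq_bigr => a _; rewrite -big_split.
by apply: eq_bigr => b _; rewrite mprojD mulmxDr scalerDr.
Qed.

Lemma vproj_mul2 c b (y : V) (A : G) :
  vproj c (y *m mproj b A) = vproj c (vproj (c (+) b) y *m A).
Proof.
apply/rowP => j; rewrite !mxE.
case: ifP => hj //.
apply: eq_bigr => i _; rewrite !mxE.
move: hj; case: (ipar i); case: (ipar j); case: c; case: b => //=; by rewrite ?mul0r ?mulr0.
Qed.

Lemma annV_mproj (W : {vspace V}) Y b w : graded_V W -> annV W Y -> w \in W ->
  w *m mproj b Y = 0.
Proof.
move=> gW hY wW; rewrite -(vproj_sum (w *m mproj b Y)).
by rewrite big1 // => c _; rewrite vproj_mul2 hY ?vproj0 // gW.
Qed.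

Lemma annV_mproj2 (W : {vspace V}) Y b : graded_V W -> annV W Y -> annV W (mproj b Y).
Proof. by move=> gW hY w wW; rewrite (annV_mproj _ gW hY wW). Qed.

Lemma sterm_ann (W : {vspace V}) x Y : graded_V W -> x \in W -> annV W Y -> sterm x Y = 0.
Proof.
move=> gW xW hY; rewrite /sterm big1 // => a _; rewrite big1 // => b _.
by rewrite (annV_mproj _ gW hY) ?scaler0 // gW.
Qed.

Lemma ann_sep (W : {vspace V}) x : x \notin W -> exists Y, annV W Y /\ x *m Y != 0.
Proof.
move=> xW; exists (lin1_mx (\1%VF - projv W)); split.
  move=> w wW; rewrite mul_rV_lin1 /= add_lfunE opp_lfunE id_lfunE projv_id ?subrr //.
rewrite mul_rV_lin1 /= add_lfunE opp_lfunE id_lfunE subr_eq0.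
by apply: contra xW => /eqP ->; apply: memv_proj.
Qed.

Lemma two_neq0 : [pchar F] =i pred0 -> (2%:R : F)^-1 != 0.
Proof. by move=> /pcharf0P h; rewrite invr_eq0 h. Qed.

Lemma sign2 a b : ((-1) ^+ (a && b) * (-1) ^+ (b && a) : F) = 1.
Proof. by case: a; case: b; rewrite /= ?expr0 ?expr1 ?mulr1 ?mulrNN ?mulr1. Qed.

End Basic.

Section Back.
Variables (F : fieldType) (m n : nat).
Hypothesis charF0 : [pchar F] =i pred0.
Local Notation V := (Vsp F m n).
Local Notation G := (glV F m n).
Local Notation E := (Esp F m n).

Lemma half0 (v : V) : 2%:R^-1 *: v = 0 -> v = 0.
Proof. by move/eqP; rewrite scaler_eq0 (negPf (two_neq0 charF0)) => /eqP. Qed.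

Lemma pi_proj (pi : {linear V -> G}) b y : even_map pi -> mproj b (pi y) = pi (vproj b y).
Proof.
move=> he; rewrite -{1}(vproj_split y) linearD mprojD.
rewrite (mhomP (he _ _ (vhom_proj true y))) (mhomP (he _ _ (vhom_proj false y))).
by case: b; rewrite /= ?addr0 ?add0r.
Qed.

Lemma sterm_pi (pi : {linear V -> G}) x y : even_map pi -> super_skew pi ->
  sterm x (pi y) = - (y *m pi x).
Proof.
move=> he hs; rewrite /sterm -[in RHS](vproj_sum x) linear_sum mulmx_sumr -sumrN.
apply: eq_bigr => a _; rewrite -[in RHS](vproj_sum y) mulmx_suml -sumrN.
apply: eq_bigr => b _; rewrite pi_proj //.
rewrite (hs b a (vproj b y) (vproj a x) (vhom_proj _ _) (vhom_proj _ _)).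
by rewrite scalerN scalerA sign2 scale1r.
Qed.

Lemma sterm_projc (z : V) (Y : G) c :
  sterm z (mproj c Y) = \sum_(a : bool) (-1) ^+ (a && c) *: (vproj a z *m mproj c Y).
Proof.
rewrite /sterm; apply: eq_bigr => a _.
rewrite (bigD1 c) //= mprojK eqxx big1 ?addr0 // => b /negPf hb.
by rewrite mprojK hb mulmx0 scaler0.
Qed.

Lemma vproj_sumb d (f : bool -> V) : vproj d (\sum_(a : bool) f a) = \sum_(a : bool) vproj d (f a).
Proof. by rewrite vprojE mulmx_suml; apply: eq_bigr => a _; rewrite vprojE. Qed.

Lemma sterm_sep (z : V) (Y : G) c : sterm z (mproj c Y) = 0 ->
  forall a, vproj a z *m mproj c Y = 0.
Proof.
rewrite sterm_projc => h a.
have := congr1 (vproj (a (+) c)) h.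
rewrite vproj0 vproj_sumb.
under eq_bigr => a' _ do rewrite vprojZ vproj_mul -addbA addbb addbF vprojK.
rewrite (bigD1 a) //= eqxx big1 ?addr0 => [|a' /negPf ha']; last first.
  by rewrite eq_sym ha' mul0mx scaler0.
by move/eqP; rewrite scaler_eq0 signr_eq0 => /eqP.
Qed.

Lemma backward (L : {vspace E}) (W : {vspace V}) (pi : {linear V -> G}) :
  graded_V W -> even_map pi -> super_skew pi -> L_of L W pi -> max_isotropic L.
Proof.
move=> gW he hs hL.
have iso : forall e f, e \in L -> f \in L -> epair e f = 0.
  move=> e f /hL [X [x [hX xW ->]]] /hL [Y [y [hY yW ->]]].
  rewrite epairE /= mulmxDr (hX y yW) add0r stermD (sterm_ann gW xW hY) add0r.
  by rewrite sterm_pi // subrr scaler0.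
have pL : forall x, x \in W -> (pi x, x) \in L.
  move=> x xW; apply/hL; exists 0, x; split => //; last by rewrite add0r.
  by move=> w _; rewrite mulmx0.
have YL : forall Y, annV W Y -> (Y, 0) \in L.
  move=> Y hY; apply/hL; exists Y, 0; split => //; first exact: mem0v.
  by rewrite linear0 addr0.
move=> e; split; first by move=> eL f fL; apply: iso.
case: e => A z hp.
have zW : z \in W.
  apply: contraT => zW; have [Y [hY hz]] := ann_sep zW.
  case/negP: hz.
  suff h : forall a c, vproj a z *m mproj c Y = 0.
    rewrite -(vproj_sum z) -(mproj_sum Y) mulmx_suml big1 // => a _.
    by rewrite mulmx_sumr big1.
  move=> a c; apply: sterm_sep.
  have := hp _ (YL _ (annV_mproj2 c gW hY)).
  by rewrite epairE /= mul0mx add0r => /half0.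
have hA : annV W (A - pi z).
  move=> w wW.
  have h1 := hp _ (pL w wW); have h2 := iso _ _ (pL z zW) (pL w wW).
  rewrite epairE /= in h1; rewrite epairE /= in h2.
  move/half0: h1 => h1; move/half0: h2 => h2.
  have : (w *m A + sterm z (pi w)) - (w *m pi z + sterm z (pi w)) = 0.
    by rewrite h1 h2 subrr.
  by rewrite opprD addrACA subrr addr0 -mulmxBr.
apply/hL; exists (A - pi z), z; split => //.
by rewrite subrK.
Qed.


Lemma part2 (L : {vspace E}) (W : {vspace V}) (pi : {linear V -> G}) :
  graded_V W -> even_map pi -> super_skew pi -> L_of L W pi ->
     (forall X : G, (X, 0) \in L <-> annV W X) /\
     (forall x : V, x \in W <-> annGl (fun X : G => (X, 0) \in L) x).
Proof.
move=> gW he hs hL.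
have D1 : forall X : G, (X, 0) \in L <-> annV W X.
  move=> X; split.
    case/hL => X' [x [hX xW [-> <-]]]; by rewrite linear0 addr0.
  move=> hX; apply/hL; exists X, 0; split => //; first exact: mem0v.
  by rewrite linear0 addr0.
split => // x; split.
  by move=> xW X /D1 hX; apply: hX.
move=> hx; apply: contraT => xW; have [Y [hY hz]] := ann_sep xW.
by case/negP: hz; apply/eqP; apply: hx; apply/D1.
Qed.

End Back.

Section Lin.
Variables (F : fieldType) (m n : nat).
Local Notation V := (Vsp F m n).
Local Notation G := (glV F m n).
Local Notation E := (Esp F m n).

Definition sndf (e : E) : V := e.2.
Definition fstf (e : E) : G := e.1.
Lemma sndf_lin : linear_for *:%R sndf. Proof. by []. Qed.
Lemma fstf_lin : linear_for *:%R fstf. Proof. by []. Qed.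
HB.instance Definition _ := GRing.isLinear.Build F E V *:%R sndf sndf_lin.
HB.instance Definition _ := GRing.isLinear.Build F E G *:%R fstf fstf_lin.

Variables (Pm : G) (s : 'Hom(V, G)).
Definition sig' (x : V) : G := \sum_(b : bool) mproj b (s (vproj b x)).
Definition piF (x : V) : G := Pm *m sig' (x *m Pm).

Lemma sig'_lin a u v : sig' (a *: u + v) = a *: sig' u + sig' v.
Proof.
rewrite /sig' scaler_sumr -big_split; apply: eq_bigr => b _.
by rewrite vprojD vprojZ linearP mprojD mprojZ.
Qed.

Lemma piF_lin : linear_for *:%R piF.
Proof.
move=> a u v; rewrite /piF mulmxDl -scalemxAl sig'_lin.
by rewrite mulmxDr scalemxAr.
Qed.
HB.instance Definition _ := GRing.isLinear.Build F V G *:%R piF piF_lin.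

Lemma sig'_hom b u : vhom b u -> mhom b (sig' u).
Proof.
move=> hu; rewrite /sig' big_bool /= !(vhomP hu).
case: b {hu}; rewrite /= linear0 mproj0 ?addr0 ?add0r; exact: mhom_proj.
Qed.

End Lin.

Section Fwd.
Variables (F : fieldType) (m n : nat).
Hypothesis charF0 : [pchar F] =i pred0.
Local Notation V := (Vsp F m n).
Local Notation G := (glV F m n).
Local Notation E := (Esp F m n).

Variable L : {vspace E}.
Hypothesis gL : graded_E L.
Hypothesis hM : max_isotropic L.

Definition f : 'Hom(E, V) := (linfun (@sndf F m n) \o projv L)%VF.
Definition W : {vspace V} := limg f.
Definition sg : 'Hom(V, G) := (linfun (@fstf F m n) \o projv L \o f^-1)%VF.

Lemma fE e : f e = (projv L e).2.
Proof. by rewrite /f comp_lfunE lfunE. Qed.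

Lemma K2 A x : (A, x) \in L -> x \in W.
Proof.
move=> h; have -> : x = f (A, x) by rewrite fE projv_id.
exact: memv_img (memvf _).
Qed.

Lemma K1 w : w \in W -> (sg w, w) \in L.
Proof.
move=> wW; have := memv_proj L (f^-1%VF w).
have -> : sg w = (projv L (f^-1%VF w)).1 by rewrite /sg !comp_lfunE lfunE.
have e2 : (projv L (f^-1%VF w)).2 = w by rewrite -fE limg_lfunVK.
by case: (projv L _) e2 => a b /= ->.
Qed.

Lemma K3 : graded_V W.
Proof.
move=> b x xW; have := gL b (K1 xW); rewrite /eproj /=; exact: K2.
Qed.

Lemma K4 Y : annV W Y -> (Y, 0) \in L.
Proof.
move=> hY; apply/hM => -[B y] fL.
by rewrite epairE /= sterm0 addr0 (hY y (K2 fL)) scaler0.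
Qed.

Lemma K5 Y : (Y, 0) \in L -> annV W Y.
Proof.
move=> YL w wW; have := (hM (Y, 0)).1 YL _ (K1 wW).
by rewrite epairE /= sterm0 addr0 => /(half0 charF0).
Qed.

Lemma K6 w : w \in W -> (sig' sg w, w) \in L.
Proof.
move=> wW.
have -> : (sig' sg w, w) = eproj true (sg (vproj true w), vproj true w)
   + eproj false (sg (vproj false w), vproj false w).
  rewrite /sig' big_bool /eproj /= !vprojK /=; rewrite -[w in (_, w)](vproj_split w); reflexivity.
by apply: memvD; apply: gL; apply: K1; apply: K3.
Qed.


Definition Pm : G := \sum_(b : bool) Dm F m n b *m lin1_mx (projv W) *m Dm F m n b.

Lemma P1 y : y *m Pm = \sum_(b : bool) vproj b (projv W (vproj b y)).
Proof.
rewrite /Pm mulmx_sumr; apply: eq_bigr => b _.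
by rewrite !mulmxA -vprojE mul_rV_lin1 /= -vprojE.
Qed.

Lemma P2 x : x \in W -> x *m Pm = x.
Proof.
move=> xW; rewrite P1 -[RHS]vproj_sum; apply: eq_bigr => b _.
by rewrite projv_id ?vprojK ?eqxx // K3.
Qed.

Lemma P3 y : y *m Pm \in W.
Proof. rewrite P1; apply: memv_suml => b _; apply: K3; exact: memv_proj. Qed.

Lemma P4 c y : vproj c (y *m Pm) = vproj c y *m Pm.
Proof.
rewrite !P1 vproj_sumb !big_bool /= !vprojK.
by case: c; rewrite /= ?linear0 [vproj _ 0]vprojE mul0mx ?addr0 ?add0r.
Qed.

Lemma P5 : mhom false Pm.
Proof.
rewrite /mhom; apply/matrixP => i j; rewrite !mxE.
case: ifP => // h; rewrite summxE big1 // => b _.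
rewrite mul_mx_diag mul_diag_mx !mxE.
move: h; case: (ipar i); case: (ipar j); case: b => //=; by rewrite ?mul0r ?mulr0.
Qed.

Definition pi := piF Pm sg.

Lemma K7 x : x \in W -> (pi x, x) \in L.
Proof.
move=> xW; rewrite /pi /piF P2 //.
set S := sig' sg x.
have -> : (Pm *m S, x) = ((Pm - 1) *m S, 0) + (S, x).
  have -> : ((Pm - 1) *m S, 0) + (S, x) = ((Pm - 1) *m S + S, 0 + x) by []. by rewrite mulmxBl mul1mx subrK add0r.
apply: memvD; last exact: K6.
apply: K4 => w wW; by rewrite mulmxA mulmxBr mulmx1 P2 // subrr mul0mx.
Qed.


Lemma fwd_even : even_map pi.
Proof.
move=> b x hx; rewrite /pi /piF.
have hu : vhom b (x *m Pm) by rewrite /vhom P4 hx.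
exact: (mhomM P5 (sig'_hom sg hu)).
Qed.

Lemma fwd_skew : super_skew pi.
Proof.
move=> a b x y hx hy; rewrite /pi /piF !mulmxA.
have hu : vhom a (x *m Pm) by rewrite /vhom P4 hx.
have hv : vhom b (y *m Pm) by rewrite /vhom P4 hy.
have := (hM _).1 (K6 (P3 x)) _ (K6 (P3 y)).
rewrite epairE /= (sterm_hom hu (sig'_hom sg hv)) => /(half0 charF0) /eqP.
by rewrite addr_eq0 => /eqP.
Qed.

Lemma fwd_L : L_of L W pi.
Proof.
move=> -[A x]; split.
  move=> eL; have xW := K2 eL.
  exists (A - pi x), x; split => //; last by rewrite subrK.
  apply: K5.
  have -> : (A - pi x, 0) = (A, x) - (pi x, x).
    by have -> : (A, x) - (pi x, x) = (A - pi x, x - x) by []; rewrite subrr.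
  exact: memvB eL (K7 xW).
case=> X [x' [hX xW [-> ->]]].
have -> : (X + pi x', x') = (X, 0) + (pi x', x').
  by have -> : (X, 0) + (pi x', x') = (X + pi x', 0 + x') by []; rewrite add0r.
by apply: memvD; [apply: K4 | apply: K7].
Qed.

End Fwd.

Lemma forward (F : fieldType) (m n : nat) (charF0 : [pchar F] =i pred0)
  (L : {vspace Esp F m n}) (gL : graded_E L) :
  max_isotropic L ->
  exists (W : {vspace Vsp F m n}) (pi : {linear Vsp F m n -> glV F m n}),
       [/\ graded_V W, even_map pi, super_skew pi & L_of L W pi].
Proof.
move=> hM.
exists (W L), (pi L); split.
- exact: K3.
- exact: fwd_even.
- exact: fwd_skew.
- exact: fwd_L.
Qed.

Unset Implicit Arguments.

Theorem mainTheorem4 (F : fieldType) (m n : nat)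
  (charF0 : [pchar F] =i pred0)
  (L : {vspace Esp F m n}) (gradedL : graded_E L) :
  (max_isotropic L <->
     exists (W : {vspace Vsp F m n}) (pi : {linear Vsp F m n -> glV F m n}),
       [/\ graded_V W, even_map pi, super_skew pi & L_of L W pi])
  /\
  (forall (W : {vspace Vsp F m n}) (pi : {linear Vsp F m n -> glV F m n}),
     graded_V W -> even_map pi -> super_skew pi -> L_of L W pi ->
     (forall X : glV F m n, (X, 0) \in L <-> annV W X) /\
     (forall x : Vsp F m n,
        x \in W <-> annGl (fun X : glV F m n => (X, 0) \in L) x)).
Proof.
split.
  split; first exact: forward.
  by case=> W [pi [gW he hs hL]]; apply: (backward charF0 gW he hs hL).
move=> W pi gW he hs hL; exact: (part2 gW he hs hL).
Qed.
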